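(* Let $\mathbf A$ be a modular pseudo-Kleene lattice. For any $x,y\in A$, $x\,\mathrm C\,y$ holds if and only if the subalgebra $\mathbf{Sg}(x,y)$ of $\mathbf A$ generated by $x,y$ is a Kleene lattice (i.e. is distributive).
   Context: A pseudo-Kleene lattice is an algebra $(A,\land,\lor,{}',0,1)$ that is a bounded lattice with an antitone involution ${}'$ ($x\leq y\Rightarrow y'\leq x'$, $x''=x$) satisfying $x\land x'\leq y\lor y'$; it is modular if its lattice reduct is modular. For $a,b\in A$, $a\,\mathrm C\,b$ ($a$ commutes with $b$) means: (C1) $a\land(b\lor b')=(a\land b)\lor(a\land b')$; (C2) $b\land(a\lor a')=(b\land a)\lor(b\land a')$; (C3) $a\land a'=((a\land a')\land b)\lor((a\land a')\land b')$. $\mathbf{Sg}(x,y)$ is the smallest subset containing $x,y,0,1$ and closed under $\land,\lor,{}'$. *)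

(* Defs.v *)
From HB Require Import structures.
From mathcomp Require Import all_boot all_order.
Set Implicit Arguments. Unset Strict Implicit. Unset Printing Implicit Defensive.
Import Order.Theory.
Local Open Scope order_scope.

Section PKL.
Context {d : Order.disp_t} {L : tbLatticeType d}.

Definition antitone_involution (c : L -> L) : Prop :=
  (forall x y : L, x <= y -> c y <= c x) /\ (forall x : L, c (c x) = x).

Definition pseudo_kleene (c : L -> L) : Prop :=
  antitone_involution c /\ (forall x y : L, x `&` c x <= y `|` c y).

Definition modular_lattice : Prop :=
  forall x y z : L, x <= z -> x `|` (y `&` z) = (x `|` y) `&` z.

(** a C b : conditions (C1), (C2), (C3) *)
Definition commutes (c : L -> L) (a b : L) : Prop :=
  [/\ a `&` (b `|` c b) = (a `&` b) `|` (a `&` c b),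
      b `&` (a `|` c a) = (b `&` a) `|` (b `&` c a)
    & a `&` c a = ((a `&` c a) `&` b) `|` ((a `&` c a) `&` c b)].

Inductive Sg (c : L -> L) (x y : L) : L -> Prop :=
  | Sg_x : Sg c x y x
  | Sg_y : Sg c x y y
  | Sg_bot : Sg c x y \bot
  | Sg_top : Sg c x y \top
  | Sg_meet a b : Sg c x y a -> Sg c x y b -> Sg c x y (a `&` b)
  | Sg_join a b : Sg c x y a -> Sg c x y b -> Sg c x y (a `|` b)
  | Sg_compl a : Sg c x y a -> Sg c x y (c a).

Definition Sg_distributive (c : L -> L) (x y : L) : Prop :=
  forall a b e : L, Sg c x y a -> Sg c x y b -> Sg c x y e ->
    a `&` (b `|` e) = (a `&` b) `|` (a `&` e).

End PKL.

(* Main.v *)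
Require Import Defs.
From HB Require Import structures.
From mathcomp Require Import all_boot all_order.
Set Implicit Arguments. Unset Strict Implicit. Unset Printing Implicit Defensive.
Import Order.Theory.
Local Open Scope order_scope.

Ltac lat := match goal with
 | |- is_true (_ <= _ `&` _) => rewrite lexI; apply/andP; split; lat
 | |- is_true (_ `|` _ <= _) => rewrite leUx; apply/andP; split; lat
 | |- is_true (?a <= ?a) => exact: lexx
 | |- _ => first [ exact: le0x | exact: lex1 | assumption
                 | (apply: leIxl; lat) | (apply: leIxr; lat)
                 | (apply: lexUl; lat) | (apply: lexUr; lat) ]
 end.
Ltac latE := apply/le_anti/andP; split; lat.

Section Gen.
Context {d : Order.disp_t} {L : tbLatticeType d}.
Variable hmod : @modular_lattice d L.

Lemma md (a b z : L) : a <= z -> a `|` (b `&` z) = (a `|` b) `&` z.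
Proof. exact: hmod. Qed.

Lemma T1 (a b e : L) : a `&` (b `|` e) = (a `&` b) `|` (a `&` e) ->
  e `&` (a `|` b) = (e `&` a) `|` (e `&` b).
Proof.
move=> H.
have sh : e `&` (a `|` b) = e `&` ((a `&` (b `|` e)) `|` b).
  have -> : (a `&` (b `|` e)) `|` b = (b `|` a) `&` (b `|` e).
    by rewrite joinC md //; lat.
  latE.
rewrite sh H.
have -> : a `&` b `|` a `&` e `|` b = (a `&` e) `|` b by latE.
have := md b (_ : a `&` e <= e) ; move=> /(_ (leIr _ _)) => H2.
rewrite meetC -H2; latE.
Qed.

Lemma T2 (a b e : L) : a `&` (b `|` e) = (a `&` b) `|` (a `&` e) ->
  a `|` (b `&` e) = (a `|` b) `&` (a `|` e).
Proof.
move=> H.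
have H' : a `&` (e `|` b) = (a `&` e) `|` (a `&` b) by rewrite joinC H joinC.
have H3 := T1 H'.
rewrite -md; last by lat.
rewrite H3; latE.
Qed.
End Gen.

Section LemG.
Context {d : Order.disp_t} {L : tbLatticeType d}.
Variable hmod : @modular_lattice d L.
Variable D : L -> Prop.
Variable z : L.
Hypothesis D0 : D \bot.
Hypothesis D1 : D \top.
Hypothesis DI : forall a b, D a -> D b -> D (a `&` b).
Hypothesis DU : forall a b, D a -> D b -> D (a `|` b).
Hypothesis Ddist : forall a b e, D a -> D b -> D e ->
  a `&` (b `|` e) = (a `&` b) `|` (a `&` e).
Hypothesis Hj : forall s t, D s -> D t -> z `&` (s `|` t) = (z `&` s) `|` (z `&` t).
Hypothesis Hm : forall s t, D s -> D t -> z `|` (s `&` t) = (z `|` s) `&` (z `|` t).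

Definition EE (u : L) := exists a b, [/\ D a, D b, a <= b & u = a `|` (z `&` b)].

Lemma psiU a1 b1 a2 b2 : D b1 -> D b2 ->
  (a1 `|` (z `&` b1)) `|` (a2 `|` (z `&` b2)) = (a1 `|` a2) `|` (z `&` (b1 `|` b2)).
Proof. by move=> h1 h2; rewrite Hj // joinACA. Qed.

Lemma psiI a1 b1 a2 b2 : D a1 -> D a2 -> a1 <= b1 -> a2 <= b2 ->
  (a1 `|` (z `&` b1)) `&` (a2 `|` (z `&` b2)) = (a1 `&` a2) `|` (z `&` (b1 `&` b2)).
Proof.
move=> h1 h2 l1 l2.
rewrite (md hmod _ l1) (md hmod _ l2).
have l3 : a1 `&` a2 <= b1 `&` b2 by apply: leI2.
rewrite (md hmod _ l3).
have -> : a1 `&` a2 `|` z = z `|` (a1 `&` a2) by rewrite joinC.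
rewrite Hm // (joinC z a1) (joinC z a2).
by rewrite meetACA.
Qed.

Lemma EE_U u v : EE u -> EE v -> EE (u `|` v).
Proof.
move=> [a1 [b1 [h1 k1 l1 ->]]] [a2 [b2 [h2 k2 l2 ->]]].
exists (a1 `|` a2), (b1 `|` b2); split; auto; first by apply: leU2.
by rewrite psiU.
Qed.

Lemma EE_I u v : EE u -> EE v -> EE (u `&` v).
Proof.
move=> [a1 [b1 [h1 k1 l1 ->]]] [a2 [b2 [h2 k2 l2 ->]]].
exists (a1 `&` a2), (b1 `&` b2); split; auto; first by apply: leI2.
by rewrite psiI.
Qed.

Lemma EE_D u : D u -> EE u.
Proof. by move=> h; exists u, u; split; rewrite ?lexx ?meetKUC. Qed.

Lemma EE_z : EE z.
Proof. by exists \bot, \top; split; rewrite ?le0x ?meetx1 ?join0x. Qed.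

Lemma EE_dist u v w : EE u -> EE v -> EE w ->
  u `&` (v `|` w) = (u `&` v) `|` (u `&` w).
Proof.
move=> [a1 [b1 [h1 k1 l1 ->]]] [a2 [b2 [h2 k2 l2 ->]]] [a3 [b3 [h3 k3 l3 ->]]].
rewrite psiU // psiI ?(leU2) //; auto.
rewrite !psiI // psiU; auto.
by rewrite (Ddist h1 h2 h3) (Ddist k1 k2 k3).
Qed.
End LemG.

Section Main.
Context {d : Order.disp_t} {L : tbLatticeType d}.
Variable c : L -> L.
Hypothesis hpk : pseudo_kleene c.
Hypothesis hmod : @modular_lattice d L.

Lemma cK a : c (c a) = a. Proof. exact: hpk.1.2. Qed.
Lemma cle a b : a <= b -> c b <= c a. Proof. exact: hpk.1.1. Qed.
Lemma cU a b : c (a `|` b) = c a `&` c b.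
Proof.
apply/le_anti/andP; split.
  by rewrite lexI !cle //; lat.
rewrite -[X in X <= _]cK; apply: cle; rewrite leUx; apply/andP; split.
  by rewrite -[X in X <= _]cK; apply: cle; lat.
by rewrite -[X in X <= _]cK; apply: cle; lat.
Qed.
Lemma cI a b : c (a `&` b) = c a `|` c b.
Proof. by rewrite -[a]cK -[b]cK -cU !cK. Qed.
Lemma cB : c \bot = \top.
Proof. by apply/le_anti; rewrite lex1 /= -[X in X <= _]cK; apply: cle; rewrite le0x. Qed.
Lemma cT : c \top = \bot.
Proof. by rewrite -cB cK. Qed.

Lemma dualJ a b e : a `|` (b `&` e) = (a `|` b) `&` (a `|` e) ->
  c a `&` (c b `|` c e) = (c a `&` c b) `|` (c a `&` c e).
Proof. by move=> /(congr1 c); rewrite cU cI !cI !cU. Qed.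
Lemma dualM a b e : a `&` (b `|` e) = (a `&` b) `|` (a `&` e) ->
  c a `|` (c b `&` c e) = (c a `|` c b) `&` (c a `|` c e).
Proof. by move=> /(congr1 c); rewrite cU cI !cI !cU. Qed.

Variables x y : L.

Definition Dx (s : L) := s = \bot \/ s = x `&` c x \/ s = x \/ s = c x \/ s = x `|` c x \/ s = \top.

Lemma Dx_cmp s t : Dx s -> Dx t ->
  [\/ s <= t, t <= s, s = x /\ t = c x | s = c x /\ t = x].
Proof.
by case=> [|[|[|[|[|]]]]] ->; case=> [|[|[|[|[|]]]]] ->;
  first [ apply: Or41; lat | apply: Or42; lat | apply: Or43; done | apply: Or44; done].
Qed.

Lemma hj_Dx z : z `&` (x `|` c x) = (z `&` x) `|` (z `&` c x) ->
  forall s t, Dx s -> Dx t -> z `&` (s `|` t) = (z `&` s) `|` (z `&` t).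
Proof.
move=> H s t hs ht; case: (Dx_cmp hs ht) => [l|l|[-> ->]|[-> ->]] //.
- by rewrite (join_r l) join_r //; apply: leI2.
- by rewrite (join_l l) join_l //; apply: leI2.
- by rewrite joinC H joinC.
Qed.

Lemma hm_Dx z : z `|` (x `&` c x) = (z `|` x) `&` (z `|` c x) ->
  forall s t, Dx s -> Dx t -> z `|` (s `&` t) = (z `|` s) `&` (z `|` t).
Proof.
move=> H s t hs ht; case: (Dx_cmp hs ht) => [l|l|[-> ->]|[-> ->]] //.
- by rewrite (meet_l l) meet_l //; apply: leU2.
- by rewrite (meet_r l) meet_r //; apply: leU2.
- by rewrite meetC H meetC.
Qed.

Lemma DxI s t : Dx s -> Dx t -> Dx (s `&` t).
Proof.
move=> hs ht; case: (Dx_cmp hs ht) => [l|l|[-> ->]|[-> ->]].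
- by rewrite (meet_l l).
- by rewrite (meet_r l).
- by right; left.
- by right; left; rewrite meetC.
Qed.

Lemma DxU s t : Dx s -> Dx t -> Dx (s `|` t).
Proof.
move=> hs ht; case: (Dx_cmp hs ht) => [l|l|[-> ->]|[-> ->]].
- by rewrite (join_r l).
- by rewrite (join_l l).
- by do 4 right; left.
- by do 4 right; left; rewrite joinC.
Qed.

Lemma Dx0 : Dx \bot. Proof. by left. Qed.
Lemma Dx1 : Dx \top. Proof. by do 5 right. Qed.
Lemma Dxx : Dx x. Proof. by do 2 right; left. Qed.
Lemma Dxcx : Dx (c x). Proof. by do 3 right; left. Qed.

Lemma Dx_dist a b e : Dx a -> Dx b -> Dx e -> a `&` (b `|` e) = (a `&` b) `|` (a `&` e).
Proof.
move=> ha; apply: hj_Dx.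
by case: ha => [|[|[|[|[|]]]]] ->; latE.
Qed.

Hypothesis hC : commutes c x y.

Lemma C1 : x `&` (y `|` c y) = (x `&` y) `|` (x `&` c y). Proof. by case: hC. Qed.
Lemma C2 : y `&` (x `|` c x) = (y `&` x) `|` (y `&` c x). Proof. by case: hC. Qed.
Lemma C3 : x `&` c x = ((x `&` c x) `&` y) `|` ((x `&` c x) `&` c y). Proof. by case: hC. Qed.
Lemma pQ : x `&` c x <= y `|` c y. Proof. exact: hpk.2. Qed.
Lemma qP : y `&` c y <= x `|` c x. Proof. exact: hpk.2. Qed.

Lemma Mp : (x `&` c x) `&` (y `|` c y) = ((x `&` c x) `&` y) `|` ((x `&` c x) `&` c y).
Proof. by rewrite (meet_l pQ) -C3. Qed.

Lemma Mcx : c x `&` (y `|` c y) = (c x `&` y) `|` (c x `&` c y).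
Proof.
have := dualJ (T2 hmod C1); rewrite cK => H.
by rewrite [y `|` _]joinC H joinC.
Qed.

Lemma MP : (x `|` c x) `&` (y `|` c y) = ((x `|` c x) `&` y) `|` ((x `|` c x) `&` c y).
Proof.
have := dualJ (T2 hmod Mp); rewrite cI !cK (joinC (c x)) => H.
by rewrite [y `|` _]joinC H joinC.
Qed.

Lemma Hyj : y `&` (x `|` c x) = (y `&` x) `|` (y `&` c x). Proof. exact: C2. Qed.
Lemma Hym : y `|` (x `&` c x) = (y `|` x) `&` (y `|` c x). Proof. exact (T2 hmod C2). Qed.
Lemma Hy'j : c y `&` (x `|` c x) = (c y `&` x) `|` (c y `&` c x).
Proof.
have := dualJ Hym; rewrite cK => H.
by rewrite joinC H joinC.
Qed.
Lemma Hy'm : c y `|` (x `&` c x) = (c y `|` x) `&` (c y `|` c x).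
Proof. exact (T2 hmod Hy'j). Qed.

Lemma S1 : c x `&` (x `|` (y `&` c y)) <= (x `&` c x) `|` ((y `&` c y) `&` c x).
Proof.
have a : c x `&` (y `|` x) = (c x `&` y) `|` (c x `&` x) := T1 hmod C2.
have b : c x `&` (c y `|` x) = (c x `&` c y) `|` (c x `&` x) := T1 hmod Hy'j.
have cc : x `|` (y `&` c y) = (x `|` y) `&` (x `|` c y) := T2 hmod C1.
have dd : (x `&` c x) `|` (y `&` c y) = ((x `&` c x) `|` y) `&` ((x `&` c x) `|` c y)
  := T2 hmod Mp.
have e : (x `&` c x) `|` ((y `&` c y) `&` c x) = ((x `&` c x) `|` (y `&` c y)) `&` c x.
  by rewrite md //; lat.
rewrite e dd cc.
have h1 : c x `&` (x `|` y) <= (x `&` c x) `|` y.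
  rewrite joinC a; lat.
have h2 : c x `&` (x `|` c y) <= (x `&` c x) `|` c y.
  rewrite joinC b; lat.
rewrite !lexI; apply/andP; split; first (apply/andP; split).
- apply: le_trans h1; lat.
- apply: le_trans h2; lat.
- lat.
Qed.

Lemma S3 : y `&` c y <= ((y `&` c y) `&` x) `|` ((y `&` c y) `&` c x).
Proof.
have S2 : x `|` (y `&` c y) <= x `|` ((y `&` c y) `&` c x).
  have h : x `|` (y `&` c y) = x `|` (c x `&` (x `|` (y `&` c y))).
    rewrite (md hmod (c x) (_ : x <= x `|` (y `&` c y))); last lat.
    apply/le_anti/andP; split; last lat.
    rewrite lexI lexx /= leUx leUl /= andbT; exact: qP.
  rewrite h; apply: le_trans (leU2 (lexx x) S1) _; lat.
have h3 : (y `&` c y) <= (y `&` c y) `&` (x `|` ((y `&` c y) `&` c x)).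
  rewrite lexI lexx /=; apply: le_trans S2; lat.
apply: le_trans h3 _.
have e := md hmod x (leIl (y `&` c y) (c x)).
apply: (le_trans (_ : _ <= (((y `&` c y) `&` c x) `|` x) `&` (y `&` c y))); first lat.
rewrite -e; lat.
Qed.

Lemma Hqj : (c y `&` y) `&` (x `|` c x) = ((c y `&` y) `&` x) `|` ((c y `&` y) `&` c x).
Proof.
rewrite (meetC (c y)); apply/le_anti/andP; split; last lat.
apply: le_trans S3; lat.
Qed.

Lemma HQm : (c y `|` y) `|` (x `&` c x) = ((c y `|` y) `|` x) `&` ((c y `|` y) `|` c x).
Proof.
have := dualM Hqj; rewrite cI !cK => H.
by rewrite (joinC (c y) y) meetC H meetC.
Qed.

Lemma Tj a : Dx a -> c y `&` (a `|` y) = (c y `&` a) `|` (c y `&` y).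
Proof.
case=> [|[|[|[|[|]]]]] ->.
- latE.
- exact (T1 hmod Mp).
- exact (T1 hmod C1).
- exact (T1 hmod Mcx).
- exact (T1 hmod MP).
- latE.
Qed.

Lemma Tm a : Dx a -> c y `|` (a `&` y) = (c y `|` a) `&` (c y `|` y).
Proof. by move=> ha; exact (T2 hmod (Tj ha)). Qed.

Lemma F1 a b : Dx a -> a <= b ->
  c y `&` (a `|` (y `&` b)) = (c y `&` a) `|` ((c y `&` y) `&` b).
Proof.
move=> ha lab.
rewrite (md hmod y lab) meetA (Tj ha).
rewrite (md hmod (c y `&` y) (_ : c y `&` a <= b)) //.
exact: le_trans (leIr _ _) lab.
Qed.

Lemma F2 a b : Dx b -> a <= b ->
  c y `|` (a `|` (y `&` b)) = ((c y `|` y) `|` a) `&` (c y `|` b).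
Proof.
move=> hb lab.
rewrite joinCA (meetC y b) (Tm hb) meetC.
rewrite (md hmod (c y `|` y) (_ : a <= c y `|` b)); last by apply: lexUr.
by rewrite (joinC a).
Qed.

Definition Hj1 := hj_Dx Hyj.
Definition Hm1 := hm_Dx Hym.
Definition Dxy := EE Dx y.

Lemma Dxy0 : Dxy \bot. Proof. exact (EE_D y Dx0). Qed.
Lemma Dxy1 : Dxy \top. Proof. exact (EE_D y Dx1). Qed.
Lemma DxyI a b : Dxy a -> Dxy b -> Dxy (a `&` b).
Proof. exact (@EE_I _ _ hmod _ _ DxI Hm1 a b). Qed.
Lemma DxyU a b : Dxy a -> Dxy b -> Dxy (a `|` b).
Proof. exact (@EE_U _ _ _ _ DxU Hj1 a b). Qed.
Lemma Dxy_dist a b e : Dxy a -> Dxy b -> Dxy e -> a `&` (b `|` e) = (a `&` b) `|` (a `&` e).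
Proof. exact (@EE_dist _ _ hmod _ _ DxI DxU Dx_dist Hj1 Hm1 a b e). Qed.

Lemma Hj2 s t : Dxy s -> Dxy t -> c y `&` (s `|` t) = (c y `&` s) `|` (c y `&` t).
Proof.
move=> [a1 [b1 [ha1 hb1 l1 ->]]] [a2 [b2 [ha2 hb2 l2 ->]]].
rewrite (psiU Hj1 a1 a2 hb1 hb2) (F1 (DxU ha1 ha2) (leU2 l1 l2)) (F1 ha1 l1) (F1 ha2 l2).
rewrite (hj_Dx Hy'j ha1 ha2) (hj_Dx Hqj hb1 hb2).
by rewrite joinACA.
Qed.

Lemma Hm2 s t : Dxy s -> Dxy t -> c y `|` (s `&` t) = (c y `|` s) `&` (c y `|` t).
Proof.
move=> [a1 [b1 [ha1 hb1 l1 ->]]] [a2 [b2 [ha2 hb2 l2 ->]]].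
rewrite (psiI hmod Hm1 ha1 ha2 l1 l2) (F2 (DxI hb1 hb2) (leI2 l1 l2)) (F2 hb1 l1) (F2 hb2 l2).
rewrite (hm_Dx HQm ha1 ha2) (hm_Dx Hy'm hb1 hb2).
by rewrite meetACA.
Qed.

Definition E2 := EE Dxy (c y).

Lemma E2_Sg s : Sg c x y s -> E2 s /\ E2 (c s).
Proof.
have I2 := EE_I hmod DxyI Hm2.
have U2 := EE_U DxyU Hj2.
have inD u : Dx u -> E2 u by move=> h; apply: EE_D; apply: EE_D.
elim=> {s}.
- by split; apply: inD; [apply: Dxx | apply: Dxcx].
- split; first by apply: EE_D; apply: EE_z; [apply: Dx0 | apply: Dx1].
  by apply: EE_z; [apply: Dxy0 | apply: Dxy1].
- by rewrite cB; split; apply: inD; [apply: Dx0 | apply: Dx1].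
- by rewrite cT; split; apply: inD; [apply: Dx1 | apply: Dx0].
- move=> a b _ [ha hca] _ [hb hcb]; split; first exact: I2.
  by rewrite cI; apply: U2.
- move=> a b _ [ha hca] _ [hb hcb]; split; first exact: U2.
  by rewrite cU; apply: I2.
- by move=> a _ [ha hca]; rewrite cK; split.
Qed.

Lemma E2_dist a b e : E2 a -> E2 b -> E2 e -> a `&` (b `|` e) = (a `&` b) `|` (a `&` e).
Proof. exact (@EE_dist _ _ hmod _ _ DxyI DxyU Dxy_dist Hj2 Hm2 a b e). Qed.

End Main.

Theorem theorem4p14 (d : Order.disp_t) (L : tbLatticeType d) (c : L -> L)
    (hpk : pseudo_kleene c) (hmod : @modular_lattice d L) (x y : L) :
  commutes c x y <-> Sg_distributive c x y.
Proof.
split.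
  move=> hC a b e ha hb he.
  exact: (E2_dist hpk hmod hC (E2_Sg hpk hmod hC ha).1 (E2_Sg hpk hmod hC hb).1
                  (E2_Sg hpk hmod hC he).1).
move=> H.
have sx : Sg c x y x by constructor.
have sy : Sg c x y y by constructor.
have scx : Sg c x y (c x) by apply: Sg_compl.
have scy : Sg c x y (c y) by apply: Sg_compl.
have sp : Sg c x y (x `&` c x) by apply: Sg_meet.
split.
- exact: H.
- exact: H.
- by rewrite -(H _ _ _ sp sy scy) (meet_l (hpk.2 x y)).
Qed.
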